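(* For $k\in\mathbb{N}$ and $s\in\mathbb{N}_0$ let \[ C_{s,k}:=\sum_{m=0}^{2s}(-1)^m\binom{2k+2s}{m}S(2k+2s-m,2k)\,k^m, \] where $S(n,m)$ denote the Stirling numbers of the second kind. Then for every $k\in\mathbb{N}$ and every $t$ with $|t|<1/k$, \[ \sum_{s=0}^{\infty}C_{s,k}\,t^{2s+2k}=\prod_{j=1}^{k}\frac{t^2}{1-j^2t^2}. \]
   Context: $S(n,m)$ is the Stirling number of the second kind (number of partitions of an $n$-element set into $m$ nonempty blocks), with $S(n,m)=0$ if $n<m$. *)

(* Defs.v *)
From HB Require Import structures.
From mathcomp Require Import all_boot all_order all_algebra.
From mathcomp Require Import all_classical all_reals all_analysis.
Set Implicit Arguments. Unset Strict Implicit. Unset Printing Implicit Defensive.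
Import Order.TTheory GRing.Theory Num.Theory.

(* Stirling number of the second kind S(n,m): the number of partitions of an
   n-element set (here 'I_n) into m nonempty blocks.  (Mathcomp's [partition]
   requires blocks to be nonempty, pairwise disjoint and to cover the set.)
   Automatically 0 when n < m. *)
Definition stirling2 (n m : nat) : nat :=
  #|[set P : {set {set 'I_n}} | finset.partition P [set: 'I_n] & #|P| == m]|.

Definition Csk (s k : nat) : int :=
  (\sum_(m < (2 * s).+1)
     (-1) ^+ m * ('C(2 * k + 2 * s, m) * stirling2 (2 * k + 2 * s - m) (2 * k) * k ^ m)%N%:Z)%R.

(* Main.v *)
Require Import Defs.
From HB Require Import structures.
From mathcomp Require Import all_boot all_order all_algebra.
From mathcomp Require Import all_classical all_reals all_analysis.
From mathcomp Require Import ring lra zify.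
Import Order.TTheory GRing.Theory Num.Theory numFieldNormedType.Exports.

Set Implicit Arguments. Unset Strict Implicit. Unset Printing Implicit Defensive.

Module CombM.
Import ssrbool eqtype ssrnat seq bigop fintype finset.
Section CombS.
Variable T : finType.
Definition Part (D : {set T}) m := [set P : {set {set T}} | finset.partition P D & #|P| == m].


Variables (x : T) (D : {set T}).
Hypothesis xD : x \notin D.

Definition g1 (Q : {set {set T}}) := [set x] |: Q.
Definition phi (QC : {set {set T}} * {set T}) := (x |: QC.2) |: (QC.1 :\ QC.2).
Definition dom m := [set QC | (QC.1 \in Part D m) && (QC.2 \in QC.1)].

Lemma notin_block Q B : finset.partition Q D -> B \in Q -> x \notin B.
Proof. by move=> pQ BQ; apply: contra xD => xB; exact: (subsetP (finset.partitionS pQ BQ)). Qed.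

Lemma sx_notin Q : finset.partition Q D -> [set x] \notin Q.
Proof. by move=> pQ; apply/negP => /(notin_block pQ); rewrite set11. Qed.

Lemma g1_part m Q : Q \in Part D m -> g1 Q \in Part (x |: D) m.+1.
Proof.
rewrite /Part !finset.inE => /andP[pQ /eqP cQ]; apply/andP; split.
  apply: finset.partitionU1 => //; first by apply/set0Pn; exists x; rewrite set11.
  by rewrite disjoint_sym finset.disjoints_subset; apply/subsetP => y yD; rewrite !finset.inE; apply: contra xD => /eqP <-.
by rewrite /g1 cardsU1 (sx_notin pQ) cQ.
Qed.

Lemma phi_part m QC : QC \in dom m -> phi QC \in Part (x |: D) m.
Proof.
case: QC => Q C; rewrite /dom /phi /Part !finset.inE /= => /andP[/andP[pQ /eqP cQ] CQ].
have xC : x \notin C := notin_block pQ CQ.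
have CD := finset.partitionS pQ CQ.
apply/andP; split.
  have -> : x |: D = (x |: C) :|: (D :\: C).
    apply/setP => y; rewrite !finset.inE; case: (y =P x) => //= _.
    by case yC: (y \in C); rewrite ?andbT //= (subsetP CD).
  apply: finset.partitionU1; first exact: finset.partitionD1.
    by apply/set0Pn; exists x; rewrite setU11.
  rewrite finset.disjoints_subset; apply/subsetP => y; rewrite !finset.inE => /orP[/eqP->|yC].
    by rewrite negb_and xD orbT.
  by rewrite yC.
have nin : (x |: C) \notin Q :\ C.
  rewrite finset.inE negb_and; apply/orP; right; apply/negP => /(notin_block pQ).
  by rewrite setU11.
have hc := cardsD1 C Q; rewrite CQ cQ in hc.
by rewrite cardsU1 nin hc.
Qed.

Definition psi (P : {set {set T}}) :=
  ((finset.pblock P x :\ x) |: (P :\ finset.pblock P x), finset.pblock P x :\ x).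

Lemma psi_phi m QC : QC \in dom m -> psi (phi QC) = QC.
Proof.
move=> hQC; have := phi_part hQC.
case: QC hQC => Q C; rewrite /dom /phi /Part !finset.inE /= => /andP[/andP[pQ /eqP cQ] CQ].
move=> /andP[pP _].
have xC : x \notin C := notin_block pQ CQ.
have nin : (x |: C) \notin Q :\ C.
  rewrite finset.inE negb_and; apply/orP; right; apply/negP => /(notin_block pQ).
  by rewrite setU11.
have hb : finset.pblock ((x |: C) |: (Q :\ C)) x = x |: C.
  apply: def_pblock; first exact: finset.partition_trivIset pP.
    exact: setU11.
  exact: setU11.
rewrite /psi hb !setU1K //.
by rewrite finset.setD1K.
Qed.

Lemma phi_psi m P : P \in Part (x |: D) m -> [set x] \notin P ->
  psi P \in dom m /\ phi (psi P) = P.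
Proof.
rewrite /Part finset.inE => /andP[pP /eqP cP] nsx.
have xc : x \in finset.cover P by rewrite (finset.cover_partition pP) setU11.
set B := finset.pblock P x.
have BP : B \in P := finset.pblock_mem xc.
have xB : x \in B by rewrite finset.mem_pblock.
have BD : B \subset x |: D := finset.partitionS pP BP.
have tP := finset.partition_trivIset pP.
have Cn0 : B :\ x != finset.set0.
  apply/negP => /eqP h.
  suff e : [set x] = B by rewrite e BP in nsx.
  apply/setP => y; rewrite finset.inE; apply/eqP/idP => [->//|yB].
  by apply/eqP; apply: contraT => ne; move/setP: h => /(_ y); rewrite !finset.inE ne yB.
have CnP : B :\ x \notin P :\ B.
  rewrite finset.inE negb_and negbK; apply/orP; case CP: (B :\ x \in P); last by right.
  left; apply/eqP; case/set0Pn: Cn0 => y yC.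
  have yB : y \in B by move: yC; rewrite finset.inE => /andP[].
  by rewrite finset.inE -(def_pblock tP CP yC) (def_pblock tP BP yB) eqxx.
have pPB := finset.partitionD1 pP BP.
have pQ : finset.partition ((B :\ x) |: (P :\ B)) D.
  have -> : D = (B :\ x) :|: ((x |: D) :\: B).
    apply/setP => y; rewrite !finset.inE.
    case yB: (y \in B); rewrite /= ?andbF ?andbT ?orbF.
      case: (y =P x) => [->|nyx]; first by rewrite (negbTE xD).
      move: (fintype.subsetP BD y yB); rewrite !finset.inE => /orP[/eqP yx|->] //.
    by case: (y =P x) => [yx|_] //; move: yB; rewrite yx xB.
  apply: finset.partitionU1 => //.
  rewrite finset.disjoints_subset; apply/fintype.subsetP => y; rewrite !finset.inE.
  by move=> /andP[_ ->].
split.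
  rewrite /dom /psi finset.inE /= /Part finset.inE setU11 andbT -/B pQ /=.
  have hc := cardsD1 B P; rewrite BP in hc.
  by rewrite cardsU1 CnP -hc cP.
rewrite /phi /psi /= -/B setU1K // !finset.setD1K //.
Qed.

Lemma g1_inv m P : P \in Part (x |: D) m.+1 -> [set x] \in P ->
  P :\ [set x] \in Part D m /\ g1 (P :\ [set x]) = P.
Proof.
rewrite /Part finset.inE => /andP[pP /eqP cP] sxP.
split; last by rewrite /g1 finset.setD1K.
rewrite finset.inE; apply/andP; split.
  by have := finset.partitionD1 pP sxP; rewrite setU1K.
have hc := cardsD1 [set x] P; rewrite sxP cP in hc.
by case: hc => ->.
Qed.

Lemma card_dom m : #|dom m| = m * #|Part D m|.
Proof.
rewrite -sum1_card.
rewrite (eq_bigl (fun p => (p.1 \in Part D m) && (p.2 \in p.1))); last first.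
  by move=> p; rewrite /dom finset.inE.
rewrite -(pair_big_dep (fun Q => Q \in Part D m) (fun Q C => C \in Q) (fun _ _ => 1%N)) /=.
rewrite (eq_bigr (fun _ => m)); last first.
  move=> Q; rewrite /Part finset.inE => /andP[_ /eqP <-].
  by rewrite sum1_card.
by rewrite sum_nat_const mulnC.
Qed.

Lemma card_rec m : #|Part (x |: D) m.+1| = (#|Part D m| + m.+1 * #|Part D m.+1|)%N.
Proof.
rewrite -(cardsID [set P : {set {set T}} | [set x] \in P] (Part (x |: D) m.+1)).
have E1 : Part (x |: D) m.+1 :&: [set P : {set {set T}} | [set x] \in P] = g1 @: Part D m.
  apply/setP => P; rewrite !finset.inE; apply/andP/imsetP.
    move=> [PP sxP]; have PP' : P \in Part (x |: D) m.+1 by rewrite /Part finset.inE.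
    by have [h1 h2] := g1_inv PP' sxP; exists (P :\ [set x]).
  move=> [Q QP ->]; split; first by have := g1_part QP; rewrite finset.inE.
  by rewrite /g1 setU11.
have E2 : Part (x |: D) m.+1 :\: [set P : {set {set T}} | [set x] \in P] = phi @: dom m.+1.
  apply/setP => P; rewrite !finset.inE; apply/andP/imsetP.
    move=> [sxP PP]; have PP' : P \in Part (x |: D) m.+1 by rewrite /Part finset.inE.
    by have [h1 h2] := phi_psi PP' sxP; exists (psi P).
  move=> [QC QCd ->]; split; last by have := phi_part QCd; rewrite finset.inE.
  move: QCd; case: QC => Q C; rewrite /dom /phi /Part !finset.inE /=.
  move=> /andP[/andP[pQ _] CQ]; rewrite negb_or; apply/andP; split.
    have := finset.partition_neq0 pQ CQ; case/set0Pn => y yC.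
    apply/negP => /eqP /setP /(_ y); rewrite !finset.inE yC orbT => /eqP yx.
    by move: yC; rewrite yx (negbTE (notin_block pQ CQ)).
  by rewrite (negbTE (sx_notin pQ)) andbF.
rewrite E1 E2 !card_in_imset ?card_dom //.
  by move=> a b ha hb e; rewrite -(psi_phi ha) e (psi_phi hb).
move=> a b; rewrite /Part !finset.inE => /andP[pa _] /andP[pb _] e.
by rewrite -(setU1K (sx_notin pa)) -/(g1 a) e /g1 setU1K // sx_notin.
Qed.
End CombS.

Fixpoint Sr (n m : nat) : nat :=
  match n, m with
  | 0, 0 => 1%N
  | 0, _ => 0%N
  | _.+1, 0 => 0%N
  | n'.+1, m'.+1 => (Sr n' m' + m'.+1 * Sr n' m'.+1)%N
  end.

Lemma card_Part (T : finType) (n : nat) : forall (D : {set T}) m, #|D| = n -> #|Part D m| = Sr n m.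
Proof.
elim: n => [|n IH] D m cD.
  move/eqP: cD; rewrite cards_eq0 => /eqP ->.
  have -> : Part finset.set0 m = [set P : {set {set T}} | (P == finset.set0) && (#|P| == m)].
    by apply/setP => P; rewrite /Part !finset.inE partition_set0.
  case: m => [|m] /=.
    rewrite -(card1 (finset.set0 : {set {set T}})); apply: eq_card => P.
    rewrite !finset.inE; case: (P =P finset.set0) => [->|] //=.
    by rewrite cards0.
  apply/eqP; rewrite cards_eq0; apply/eqP/setP => P; rewrite !finset.inE.
  by case: (P =P finset.set0) => [->|] //=; rewrite cards0.
have : (0 < #|D|)%N by rewrite cD.
rewrite card_gt0 => /set0Pn [x xD].
have xD' : x \notin D :\ x by rewrite setD11.
have cD' : #|D :\ x| = n by have := cardsD1 x D; rewrite xD cD add1n => -[].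
have eD : D = x |: (D :\ x) by rewrite finset.setD1K.
case: m => [|m] /=.
  apply/eqP; rewrite cards_eq0; apply/eqP/setP => P; rewrite /Part !finset.inE.
  apply/negP => /andP[pP /eqP]; move/eqP; rewrite cards_eq0 => /eqP P0.
  move: pP; rewrite P0 => /andP[/eqP cov _].
  by move: xD; rewrite -cov /finset.cover big_set0 finset.inE.
by rewrite eD card_rec // !IH.
Qed.

Lemma stirling_Sr n m : #|[set P : {set {set 'I_n}} | finset.partition P [set: 'I_n] & #|P| == m]| = Sr n m.
Proof. by rewrite -/(Part _ m) (card_Part (n:=n)) // cardsT card_ord. Qed.
End CombM.

Import CombM.
Local Open Scope ring_scope.

Lemma Sr_lt n m : (n < m)%N -> Sr n m = 0%N.
Proof.
elim: n m => [|n IH] [|m] //= lt.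
rewrite IH // IH //; [by rewrite muln0 | exact: ltnW].
Qed.

Lemma Sr_S n j : Sr n.+1 j = ((if j is j'.+1 then Sr n j' else 0) + j * Sr n j)%N.
Proof. by case: j => [|j] //=; case: n. Qed.

Lemma Sr_SS n j : Sr n.+1 j.+1 = (Sr n j + j.+1 * Sr n j.+1)%N.
Proof. by []. Qed.
Lemma Sr_S0 n : Sr n.+1 0 = 0%N.
Proof. by []. Qed.
Arguments Sr : simpl never.

Section Dsec.
Variable k : nat.

Definition Dk (n j : nat) : int :=
  \sum_(i < n.+1) (-1) ^+ i * ('C(n, i) * Sr (n - i) j * k ^ i)%N%:Z.

Lemma Dk0 j : Dk 0 j = (Sr 0 j)%:Z.
Proof. by rewrite /Dk big_ord_recl big_ord0 addr0 /= expr0 mul1r bin0 mul1n muln1. Qed.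

Definition Gf n j (i : nat) : int := (-1) ^+ i * ('C(n, i) * Sr (n.+1 - i) j * k ^ i)%N%:Z.

Lemma Dk_rec n j : Dk n.+1 j = (if j is j'.+1 then Dk n j' else 0) + (j%:Z - k%:Z) * Dk n j.
Proof.
rewrite /Dk big_ord_recl /=.
under eq_bigr => i _ do rewrite /bump /= add1n subSS binS mulnDl mulnDl PoszD mulrDr.
rewrite big_split /=.
have e1 : \sum_(i < n.+1) (-1) ^+ (lift ord0 i) * ('C(n, i) * Sr (n - i) j * k ^ (lift ord0 i))%N%:Z
   = - k%:Z * \sum_(i < n.+1) (-1) ^+ i * ('C(n, i) * Sr (n - i) j * k ^ i)%N%:Z.
  rewrite mulr_sumr; apply: eq_bigr => i _; rewrite /= /bump /= add1n exprS expnS.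
  rewrite !PoszM; ring.
rewrite e1.
have e2 : (-1) ^+ 0 * ('C(n.+1, 0) * Sr (n.+1 - 0) j * k ^ 0)%N%:Z + \sum_(i < n.+1) (-1) ^+ i.+1 * ('C(n, i.+1) * Sr (n - i) j * k ^ i.+1)%N%:Z
   = \sum_(i < n.+2) Gf n j i.
  by rewrite [RHS]big_ord_recl /Gf /= !bin0.
rewrite addrA e2 big_ord_recr /= {2}/Gf bin_small // mul0n mul0n mulr0 addr0.
have e3 : \sum_(i < n.+1) Gf n j i = (if j is j'.+1 then \sum_(i < n.+1) (-1) ^+ i * ('C(n, i) * Sr (n - i) j' * k ^ i)%N%:Z else 0)
   + j%:Z * \sum_(i < n.+1) (-1) ^+ i * ('C(n, i) * Sr (n - i) j * k ^ i)%N%:Z.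
  clear e1 e2; case: j => [|j].
    rewrite add0r mul0r; apply: big1 => i _; by rewrite /Gf subSn ?(leq_ord i)// Sr_S0 muln0 mul0n mulr0.
  rewrite mulr_sumr -big_split /=; apply: eq_bigr => i _.
  rewrite /Gf subSn ?(leq_ord i)// Sr_SS mulnDr mulnDl PoszD !PoszM; ring.
rewrite e3; clear e1 e2 e3; case: j => [|j]; rewrite ?add0r; ring.
Qed.
End Dsec.

Lemma Csk_Dk s k : Csk s k = Dk k (2 * k + 2 * s) (2 * k).
Proof.
rewrite /Csk /Dk [RHS](bigID (fun i : 'I__ => (i < (2 * s).+1)%N)) /=.
rewrite [X in _ = _ + X]big1 ?addr0; last first.
  move=> i; rewrite -leqNgt => lo; have hi := ltn_ord i.
  by rewrite Sr_lt ?muln0 ?mul0n ?mulr0 //; lia.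
have le : ((2 * s).+1 <= (2 * k + 2 * s).+1)%N by lia.
rewrite -(big_ord_widen _ (fun i => (-1) ^+ i * ('C(2 * k + 2 * s, i) * Sr (2 * k + 2 * s - i) (2 * k) * k ^ i)%N%:Z) le).
by apply: eq_bigr => i _; rewrite /stirling2 stirling_Sr.
Qed.

Lemma Dk_bound k n j : (0 < k)%N -> (j <= 2 * k)%N ->
  `|Dk k n j| <= ('C(n, j) * k ^ n)%N%:Z.
Proof.
move=> k0; elim: n j => [|n IH] j jk.
  rewrite Dk0; case: j jk => [|j] _; first by rewrite bin0.
  by rewrite /Sr /= normr0.
rewrite Dk_rec.
have hc : `|j%:Z - k%:Z| <= k%:Z by lia.
have h2 : `|(j%:Z - k%:Z) * Dk k n j| <= k%:Z * ('C(n, j) * k ^ n)%N%:Z.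
  by rewrite normrM; apply: ler_pM => //; apply: IH.
case: j jk hc h2 IH => [|j] jk hc h2 IH.
  by rewrite add0r (le_trans h2) // bin0 -!PoszM mul1n mul1n expnS.
apply: (le_trans (ler_normD _ _)).
have h1 := IH j (ltnW jk).
rewrite binS mulnDl PoszD expnS.
have e1 : ('C(n, j) * (k * k ^ n))%N%:Z >= ('C(n, j) * k ^ n)%N%:Z.
  by rewrite lez_nat leq_mul2l leq_pmull // orbT.
have e2 : ('C(n, j.+1) * (k * k ^ n))%N%:Z = k%:Z * ('C(n, j.+1) * k ^ n)%N%:Z.
  by rewrite -PoszM mulnCA.
rewrite addrC; apply: lerD; first by rewrite e2.
exact: le_trans h1 e1.
Qed.

Local Open Scope classical_set_scope.

Section Binq.
Variable R : realType.

Lemma binq (j : nat) (q : R) : 0 <= q < 1 ->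
  (fun N => ('C(N, j))%:R * q ^+ N) @ \oo --> 0.
Proof.
move=> /andP[q0 q1].
set r := (1 + q) / 2.
have r0 : 0 < r by rewrite /r; lra.
have r1 : r < 1 by rewrite /r; lra.
have qr : q <= r by rewrite /r; lra.
have M0 : 0 < (1 - r) ^+ j by apply: exprn_gt0; lra.
have bnd N : ('C(N, j))%:R * r ^+ N <= ((1 - r) ^+ j)^-1.
  rewrite -[X in _ <= X]div1r ler_pdivlMr // -mulrA.
  have h : (r + (1 - r)) ^+ N = 1 by rewrite addrC subrK expr1n.
  case: (leqP j N) => jN; last by rewrite bin_small // mul0r ltW.
  rewrite -[X in _ <= X]h.
  rewrite [X in _ <= X]exprDn (bigD1 (Ordinal (leq_ltn_trans jN (ltnSn N)))) //= -[X in X <= _]addr0.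
  apply: lerD; last by apply: sumr_ge0 => i _; rewrite mulrn_wge0 // mulr_ge0 // exprn_ge0 //; lra.
  rewrite -mulr_natr mulrC mulrA mulr1 -[X in _ <= X]mulr_natr; apply: ler_wpM2r => //.
  apply: ler_wpM2r; first by apply: exprn_ge0; lra.
  by apply: ler_wiXn2l; [lra|lra|exact: leq_subr].
apply: (@squeeze_cvgr _ _ _ _ (cst 0) (fun N => ((1 - r) ^+ j)^-1 * (q / r) ^+ N)).
- near=> N; apply/andP; split.
    by rewrite /cst mulr_ge0 // exprn_ge0.
  have -> : ('C(N, j))%:R * q ^+ N = ('C(N, j))%:R * r ^+ N * (q / r) ^+ N.
    by rewrite -mulrA -exprMn mulrCA divff ?mulr1 // gt_eqF.
  apply: ler_wpM2r; last exact: bnd.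
  by apply: exprn_ge0; apply: divr_ge0 => //; lra.
- exact: cvg_cst.
- rewrite -[X in _ --> X](mulr0 ((1 - r) ^+ j)^-1).
  apply: cvgMl_tmp; apply: cvg_expr.
  rewrite ger0_norm ?divr_ge0 //; last lra.
  rewrite ltr_pdivrMr // mul1r.
  rewrite /r; lra.
Unshelve. all: by end_near.
Qed.
End Binq.

Section Main.
Variable R : realType.
Variable k : nat.
Hypothesis k0 : (0 < k)%N.

Definition cc (j : nat) : R := j%:R - k%:R.
Definition PP (t : R) j N := \sum_(0 <= n < N) (Dk k n j)%:~R * t ^+ n.
Definition PPp (t : R) j N := if j is j'.+1 then PP t j' N else 0.

Lemma cz (n : nat) : ((n%:Z)%:~R : R) = n%:R.
Proof. by []. Qed.

Lemma P_rec (t : R) j N : (1 - cc j * t) * PP t j N =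
  (Sr 0 j)%:R + t * PPp t j N - (Dk k N j)%:~R * t ^+ N.
Proof.
have A : PP t j N.+1 = PP t j N + (Dk k N j)%:~R * t ^+ N by rewrite /PP big_nat_recr.
have B : PP t j N.+1 = (Sr 0 j)%:R + t * (PPp t j N + cc j * PP t j N).
  rewrite /PP big_nat_recl // Dk0 expr0 mulr1 cz; congr (_ + _).
  rewrite mulrDr /PPp /cc.
  under eq_bigr do rewrite Dk_rec rmorphD rmorphM /= rmorphB /= !cz mulrDl exprS.
  rewrite big_split /=; congr (_ + _).
    clear A; case: j => [|j] /=.
      by rewrite mulr0; apply: big1 => i _; rewrite mul0r.
    by rewrite /PP mulr_sumr; apply: eq_bigr => i _; rewrite mulrCA.
  rewrite /PP !mulr_sumr; apply: eq_bigr => i _; ring.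
apply/eqP; rewrite -subr_eq0; apply/eqP.
have -> : (1 - cc j * t) * PP t j N - ((Sr 0 j)%:R + t * PPp t j N - (Dk k N j)%:~R * t ^+ N)
  = (PP t j N + (Dk k N j)%:~R * t ^+ N) - ((Sr 0 j)%:R + t * (PPp t j N + cc j * PP t j N)) by ring.
by rewrite -A -B subrr.
Qed.

Lemma cc_bound j : (j <= 2 * k)%N -> `|cc j| <= k%:R.
Proof.
move=> jk; have : (j%:R : R) <= 2 * k%:R by rewrite -natrM ler_nat.
rewrite /cc ler_norml => h; have := ler0n R j; move=> h0; apply/andP; split; lra.
Qed.

Lemma ct_lt1 (t : R) j : `|t| < k%:R^-1 -> (j <= 2 * k)%N -> `|cc j * t| < 1.
Proof.
move=> ht jk; rewrite normrM.
have kp : (0 : R) < k%:R by rewrite ltr0n.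
apply: (le_lt_trans (ler_wpM2r (normr_ge0 t) (cc_bound jk))).
by rewrite -ltr_pdivlMl // mulr1.
Qed.

Lemma rem_cvg (t : R) j : `|t| < k%:R^-1 -> (j <= 2 * k)%N ->
  (fun N => (Dk k N j)%:~R * t ^+ N) @ \oo --> 0.
Proof.
move=> ht jk; apply/norm_cvg0P.
have kp : (0 : R) < k%:R by rewrite ltr0n.
apply: (@squeeze_cvgr _ _ _ _ (cst 0) (fun N => ('C(N, j))%:R * (k%:R * `|t|) ^+ N)).
- near=> N; rewrite normr_ge0 /=.
  rewrite normrM normrX -intr_norm exprMn mulrA; apply: ler_wpM2r; first exact: exprn_ge0.
  have := Dk_bound N k0 jk; rewrite -(ler_int R) => h; apply: (le_trans h).
  by rewrite PoszM rmorphM /= !cz natrX.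
- exact: cvg_cst.
- apply: binq; rewrite mulr_ge0 //=.
  by rewrite -ltr_pdivlMl // mulr1.
Unshelve. all: by end_near.
Qed.

Fixpoint LL (t : R) j := if j is j'.+1 then t * LL t j' / (1 - cc j'.+1 * t) else (1 - cc 0 * t)^-1.

Lemma P_cvg (t : R) j : `|t| < k%:R^-1 -> (j <= 2 * k)%N -> PP t j @ \oo --> LL t j.
Proof.
move=> ht; elim: j => [|j IH] jk.
  have hc : 1 - cc 0 * t != 0.
    apply/negP => /eqP h; have := ct_lt1 ht jk; have -> : cc 0 * t = 1 by lra.
    by rewrite normr1 ltxx.
  have -> : PP t 0 = fun N => (1 - (Dk k N 0)%:~R * t ^+ N) / (1 - cc 0 * t).
    apply: funext => N; apply: (mulIf hc); rewrite mulrC P_rec divfK //.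
    by rewrite /PPp mulr0 addr0.
  have -> : LL t 0 = (1 - 0) / (1 - cc 0 * t) by rewrite /= subr0 mul1r.
  by apply: cvgMr_tmp; apply: cvgB; [exact: cvg_cst | exact: rem_cvg].
have hc : 1 - cc j.+1 * t != 0.
  apply/negP => /eqP h; have := ct_lt1 ht jk; have -> : cc j.+1 * t = 1 by lra.
  by rewrite normr1 ltxx.
have -> : PP t j.+1 = fun N => (t * PP t j N - (Dk k N j.+1)%:~R * t ^+ N) / (1 - cc j.+1 * t).
  apply: funext => N; apply: (mulIf hc); rewrite mulrC P_rec divfK //.
  by rewrite /PPp /Sr add0r.
have -> : LL t j.+1 = (t * LL t j - 0) / (1 - cc j.+1 * t) by rewrite /= subr0.
apply: cvgMr_tmp; apply: cvgB; last exact: rem_cvg.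
by apply: cvgMl_tmp; apply: IH; apply: ltnW.
Qed.

End Main.

Lemma sym_prod (R : comRingType) (k : nat) (t : R) :
  \prod_(i < (2 * k).+1) (1 - (i%:R - k%:R) * t) = \prod_(1 <= l < k.+1) (1 - l%:R ^+ 2 * t ^+ 2).
Proof.
elim: k => [|k IH].
  by rewrite big_ord1 big_geq //= subrr mul0r subr0.
rewrite (_ : (2 * k.+1).+1 = ((2 * k).+1).+2); last by lia.
rewrite big_ord_recl big_ord_recr /=.
rewrite (eq_bigr (fun i : 'I_(2 * k).+1 => 1 - (i%:R - k%:R) * t)); last first.
  move=> i _; rewrite /bump /= add1n.
  by rewrite !mulrS; congr (1 - _ * t); ring.
rewrite IH [RHS]big_nat_recr //= /bump /= add1n.
rewrite (_ : (2 * k).+2 = 2 * k + 2)%N; last by lia.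
rewrite natrD natrM !mulrS; ring.
Qed.

Section Final.
Variable R : realType.
Variable k : nat.
Hypothesis k0 : (0 < k)%N.

Lemma LL_closed (t : R) j : LL k t j = t ^+ j / \prod_(i < j.+1) (1 - cc R k i * t).
Proof.
elim: j => [|j IH] /=; first by rewrite big_ord1 expr0 div1r.
by rewrite [in RHS]big_ord_recr /= IH invfM exprS; ring.
Qed.

Lemma LL_G (t : R) : LL k t (2 * k) = \prod_(1 <= j < k.+1) (t ^+ 2 / (1 - j%:R ^+ 2 * t ^+ 2)).
Proof.
rewrite LL_closed /cc sym_prod prodf_div prodr_const_nat subn1 /=.
by rewrite exprM.
Qed.

Lemma Dk_small n j : (n < j)%N -> Dk k n j = 0.
Proof.
move=> nj; rewrite /Dk; apply: big1 => i _.
by rewrite Sr_lt ?muln0 ?mul0n ?mulr0 //; apply: leq_ltn_trans (leq_subr _ _) nj.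
Qed.

Lemma even_sum (t : R) j M : PP k t j (2 * M) + PP k (- t) j (2 * M) =
  2 * \sum_(0 <= s < M) (Dk k (2 * s) j)%:~R * t ^+ (2 * s).
Proof.
elim: M => [|M IH]; first by rewrite /PP !big_geq // mulr0 addr0.
rewrite (_ : (2 * M.+1) = (2 * M).+2)%N; last by lia.
rewrite /PP !big_nat_recr //= -/(PP k t j (2 * M)) -/(PP k (- t) j (2 * M)).
have e1 : (- t) ^+ (2 * M) = t ^+ (2 * M) by rewrite !exprM sqrrN.
rewrite [(- t) ^+ (2 * M).+1]exprS !e1.
rewrite [t ^+ (2 * M).+1]exprS mulrDr -IH; ring.
Qed.

End Final.


Unset Implicit Arguments.

Theorem mainTheorem5 (R : realType) (k : nat) (t : R) :
  (0 < k)%N -> `|t| < k%:R^-1 ->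
  [series (Csk s k)%:~R * t ^+ (2 * s + 2 * k)]_s @ \oo -->
    (\prod_(1 <= j < k.+1) (t ^+ 2 / (1 - j%:R ^+ 2 * t ^+ 2)) : R).
Proof.
move=> k0 ht.
set G := \prod_(1 <= j < k.+1) _.
have htn : `|- t| < k%:R^-1 by rewrite normrN.
have jk : (2 * k <= 2 * k)%N by [].
have cu := P_cvg k0 ht jk.
have cv := P_cvg k0 htn jk.
have GT : LL k t (2 * k) = G by rewrite LL_G.
have GN : LL k (- t) (2 * k) = G.
  by rewrite LL_G; apply: eq_bigr => j _; rewrite sqrrN.
have cw : (fun M => (PP k t (2 * k) M + PP k (- t) (2 * k) M) / 2) @ \oo --> G.
  have -> : G = (G + G) / 2 by rewrite mulrDl -splitr.
  apply: cvgMr_tmp; rewrite -{1}GT -GN; exact: cvgD cu cv.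
have cf : (fun N => 2 * (N + k))%N @ \oo --> \oo.
  apply: (@cvg_comp _ _ _ (fun N => N + k)%N (fun N => 2 * N)%N); [exact: cvg_addnr | exact: cvg_mulnl].
have := cvg_comp _ _ cf cw.
suff -> : [series (Csk s k)%:~R * t ^+ (2 * s + 2 * k)]_s =
  (fun M => (PP k t (2 * k) M + PP k (- t) (2 * k) M) / 2) \o (fun N => 2 * (N + k))%N by [].
apply: funext => N; rewrite /= even_sum // [RHS]mulrC mulKf ?pnatr_eq0 // seriesEnat /=.
have z : \sum_(0 <= s < k) (Dk k (2 * s) (2 * k))%:~R * t ^+ (2 * s) = 0.
  rewrite big_nat_cond big1 // => i /andP[/andP[_ ik] _].
  by rewrite Dk_small ?mul0r //; lia.
rewrite [RHS](big_cat_nat _ (n := k)) ?leq_addl //= z add0r.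
rewrite -[X in _ = \sum_(X <= _ < _) _]add0n big_addn addnK.
apply: eq_bigr => s _; rewrite Csk_Dk.
by rewrite (_ : (2 * (s + k))%N = (2 * k + 2 * s)%N) 1?[(2 * s + 2 * k)%N]addnC //; lia.
Qed.
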